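(* Under the hypotheses of the previous setting — $k\ge 2$, $\mathcal H$ a 3-uniform linear hypergraph with no Berge cycle of length $2k+1$, $\pi$ a choice function on $\mathcal H$, $G_\pi$ the graph with edge set $\{\pi(E):E\in\mathcal H,\ \pi(E)\neq\emptyset\}$, $T$ a subtree of $G_\pi$, $x\in V(T)$, $V_i$ the set of vertices of $T$ at distance exactly $i$ from $x$ in $T$, and $G_i=G_\pi[V_i]$ — we have \[ e(G_i)\le (2k-2)|V_i| \quad\text{for all } 1\le i\le k. \]
   Context: A hypergraph is linear if any two distinct hyperedges share at most one vertex. A Berge cycle of length $m$ is a family of $m$ distinct hyperedges $H_0,\dots,H_{m-1}$ for which there exist distinct vertices $v_0,\dots,v_{m-1}$ with $\{v_i,v_{i+1}\}\subset H_i$ (indices mod $m$). A choice function on $\mathcal H$ is a map $\pi$ assigning to each hyperedge $E$ either a 2-element subset $\pi(E)\subset E$ or $\emptyset$. $e(G)$ is the number of edges of $G$. *)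

(* Defs.v *)
(* Hypergraphs on a finite vertex type V are sets of vertex
   sets; simple graphs are sets of 2-element vertex sets. *)
From mathcomp Require Import all_boot.
Set Implicit Arguments. Unset Strict Implicit. Unset Printing Implicit Defensive.

Section Hyper.
Variable V : finType.

Definition uniform3 (H : {set {set V}}) : Prop :=
  forall E, E \in H -> #|E| = 3.

Definition linear_hg (H : {set {set V}}) : Prop :=
  forall E F, E \in H -> F \in H -> E != F -> #|E :&: F| <= 1.

Definition berge_cycle (H : {set {set V}}) (m : nat) : Prop :=
  exists (hs : nat -> {set V}) (vs : nat -> V),
    (forall i, i < m -> hs i \in H) /\
    (forall i j, i < m -> j < m -> i != j -> hs i != hs j) /\
    (forall i j, i < m -> j < m -> i != j -> vs i != vs j) /\
    (forall i, i < m -> [set vs i; vs ((i + 1) %% m)] \subset hs i).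

Definition choice_fun (H : {set {set V}}) (pi : {set V} -> {set V}) : Prop :=
  forall E, E \in H -> pi E \subset E /\ (#|pi E| = 2 \/ pi E = set0).

Definition Gpi (H : {set {set V}}) (pi : {set V} -> {set V}) : {set {set V}} :=
  [set pi E | E in H & pi E != set0].

Definition adj (Ed : {set {set V}}) : rel V := fun a b => [set a; b] \in Ed.

Definition walk (Ed : {set {set V}}) (u v : V) (n : nat) : Prop :=
  exists s : seq V, size s = n /\ path (adj Ed) u s /\ last u s = v.

Definition is_tree (VT : {set V}) (ET : {set {set V}}) : Prop :=
  (forall e, e \in ET -> #|e| = 2 /\ e \subset VT) /\
  (forall u v, u \in VT -> v \in VT -> exists n, walk ET u v n) /\
  (forall c : seq V, uniq c -> 3 <= size c -> ~ cycle (adj ET) c).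

Definition subtree (Ed : {set {set V}}) (VT : {set V}) (ET : {set {set V}}) : Prop :=
  ET \subset Ed /\ is_tree VT ET.

Definition dist_eq (ET : {set {set V}}) (x v : V) (i : nat) : Prop :=
  walk ET x v i /\ forall j, j < i -> ~ walk ET x v j.

Definition e_induced (Ed : {set {set V}}) (S : {set V}) : nat :=
  #|[set e in Ed | e \subset S]|.

End Hyper.

(* Main.v *)
Require Import Defs.
From Stdlib Require Import ZArith Lia Classical ClassicalEpsilon.
From mathcomp Require Import all_boot zify.

Section CoreZ.
Local Open Scope Z_scope.

Lemma per_mult (F : Z -> bool) (p : Z) :
  (forall x, F (x + p) = F x) -> forall m x, F (x + m * p) = F x.
Proof.
move=> Hp.
have Hpos : forall m : nat, forall x, F (x + Z.of_nat m * p) = F x.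
  elim=> [|m IH] x; first by rewrite Z.add_0_r.
  have -> : x + Z.of_nat m.+1 * p = (x + Z.of_nat m * p) + p by lia.
  by rewrite Hp IH.
move=> m x.
case: (Z_le_gt_dec 0 m) => Hm.
  have -> : m = Z.of_nat (Z.to_nat m) by lia.
  by apply: Hpos.
have := Hpos (Z.to_nat (- m)) (x + m * p).
have -> : x + m * p + Z.of_nat (Z.to_nat (- m)) * p = x.
  rewrite Z2Nat.id; lia.
by move=> <-.
Qed.

Lemma per_ext (F G : Z -> bool) (d L : Z) : 0 < d ->
  (forall x, F (x + d) = F x) -> (forall x, G (x + d) = G x) ->
  (forall x, L <= x < L + d -> F x = G x) -> forall x, F x = G x.
Proof.
move=> Hd HF HG H x.
have E : x = (L + (x - L) mod d) + ((x - L) / d) * d.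
  have := Z.div_mod (x - L) d. lia.
have B := Z.mod_pos_bound (x - L) d Hd.
rewrite E per_mult // per_mult //; apply: H; lia.
Qed.

Lemma core_arith (F : Z -> bool) (n s l : Z) :
  2 <= s <= n - 2 -> 1 <= l < n -> Z.odd l = true ->
  (forall x, F (x + n) = F x) ->
  (forall p, 0 <= p < n -> F p = F (p + l)) ->
  (forall a, 0 <= a <= l - 1 -> a <= n - s - 1 -> l - s <= a -> F (- a) = F (s - l + 1 + a)) ->
  (forall a, 0 <= a <= l - 1 -> a <= s - 1 -> l + s - n <= a -> F a = F (s + l - 1 - a)) ->
  (l <= n - s -> forall a, 0 <= a <= l - 1 -> F (- a) = F (s + l - 1 - a)) ->
  (l <= s -> forall a, 0 <= a <= l - 1 -> F a = F (s - l + 1 + a)) ->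
  forall x, F x = F 0.
Proof.
move=> Hs Hl Hodd Hn Harc HX HY HZ HW.
have Hl' : forall x, F (x + l) = F x.
  move=> x; symmetry; move: x; apply: (per_ext F (fun y => F (y + l)) n 0).
  - lia.
  - exact: Hn.
  - move=> y /=; have -> : y + n + l = (y + l) + n by lia. by [].
  - move=> y Hy /=; exact: Harc.
set g := Z.gcd l n.
have Hg0 : 0 < g.
  have := Z.gcd_nonneg l n.
  have : g <> 0 by move/Z.gcd_eq_0; lia.
  rewrite /g; lia.
have Hgl : (g | l) := Z.gcd_divide_l l n.
have Hgn : (g | n) := Z.gcd_divide_r l n.
have Hgp : forall x, F (x + g) = F x.
  have [u [v Huv]] := Z.gcd_bezout l n g erefl.
  move=> x; rewrite -Huv.
  have -> : x + (u * l + v * n) = (x + u * l) + v * n by lia.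
  by rewrite per_mult // per_mult.
have Hgodd : Z.odd g = true.
  case: Hgl => q Hq.
  move: Hodd; rewrite Hq Z.odd_mul.
  by case: (Z.odd g); rewrite ?andbF.
have Hgl2 : g <= l by apply: Z.divide_pos_le => //; lia.
have Hgnl : g <= n - l.
  apply: Z.divide_pos_le; first lia.
  by apply: Z.divide_sub_r.
have back : forall p, (forall x, F (x + p) = F x) -> forall x, F (x - p) = F x.
  move=> p Hp x; rewrite -{2}(Z.sub_add p x); by rewrite Hp.
have two : forall x, F (x + 2) = F x.
  case: (Z_le_gt_dec l s) => Hls; case: (Z_le_gt_dec l (n - s)) => Hlns.
  -
    have T1 : forall y, F y = F (y + (s - 1)).
      apply: (per_ext _ _ (g) (1 - l)) => //.
      + move=> y; have -> : y + g + (s - 1) = (y + (s - 1)) + g by lia. by [].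
      + move=> y Hy; have := HZ Hlns (- y); rewrite Z.opp_involutive => ->; last lia.
        have -> : s + l - 1 - - y = (y + (s - 1)) + l by lia. by rewrite Hl'.
    have T2 : forall y, F y = F (y + (s + 1)).
      apply: (per_ext _ _ (g) (0)) => //.
      + move=> y; have -> : y + g + (s + 1) = (y + (s + 1)) + g by lia. by [].
      + move=> y Hy; rewrite (HW Hls y); last lia.
        have -> : y + (s + 1) = (s - l + 1 + y) + l by lia. by rewrite Hl'.
    move=> x; rewrite (T2 x) (T1 (x + 2)); congr F; lia.
  -
    have T2 : forall y, F (y + (s + 1)) = F y.
      move=> y; symmetry; apply: (per_ext F (fun y => F (y + (s + 1))) (g) (0)) => //.
      + move=> z /=; have -> : z + g + (s + 1) = (z + (s + 1)) + g by lia. by [].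
      + move=> z Hz /=; rewrite (HW Hls z); last lia.
        have -> : z + (s + 1) = (s - l + 1 + z) + l by lia. by rewrite Hl'.
    have Pd : forall y, F (y + (n - s - 1)) = F y.
      move=> y; have -> : y + (n - s - 1) = (y - (s + 1)) + n by lia.
      by rewrite Hn back.
    have R1 : forall y, F y = F (s + 1 - y).
      apply: (per_ext _ _ (n - s - 1) (s + 1 - n)) => //.
      + lia.
      + move=> y; have -> : s + 1 - (y + (n - s - 1)) = (s + 1 - y) - (n - s - 1) by lia.
        by rewrite back.
      + move=> y Hy; have := HX (- y); rewrite Z.opp_involutive => ->; try lia.
        have -> : s + 1 - y = (s - l + 1 + - y) + l by lia. by rewrite Hl'.
    have R2 : forall y, F y = F (s - 1 - y).
      apply: (per_ext _ _ (n - s - 1) (l + s - n)) => //.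
      + lia.
      + move=> y; have -> : s - 1 - (y + (n - s - 1)) = (s - 1 - y) - (n - s - 1) by lia.
        by rewrite back.
      + move=> y Hy; rewrite (HY y); try lia.
        have -> : s + l - 1 - y = (s - 1 - y) + l by lia. by rewrite Hl'.
    move=> x; rewrite (R1 (x + 2)) (R2 x); congr F; lia.
  -
    have T1 : forall y, F (y + (s - 1)) = F y.
      move=> y; symmetry; apply: (per_ext F (fun y => F (y + (s - 1))) (g) (1 - l)) => //.
      + move=> z /=; have -> : z + g + (s - 1) = (z + (s - 1)) + g by lia. by [].
      + move=> z Hz /=; have := HZ Hlns (- z); rewrite Z.opp_involutive => ->; last lia.
        have -> : s + l - 1 - - z = (z + (s - 1)) + l by lia. by rewrite Hl'.
    have R1 : forall y, F y = F (s + 1 - y).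
      apply: (per_ext _ _ (s - 1) (1 - l)) => //.
      + lia.
      + move=> y; have -> : s + 1 - (y + (s - 1)) = (s + 1 - y) - (s - 1) by lia.
        by rewrite back.
      + move=> y Hy; have := HX (- y); rewrite Z.opp_involutive => ->; try lia.
        have -> : s + 1 - y = (s - l + 1 + - y) + l by lia. by rewrite Hl'.
    have R2 : forall y, F y = F (s - 1 - y).
      apply: (per_ext _ _ (s - 1) (0)) => //.
      + lia.
      + move=> y; have -> : s - 1 - (y + (s - 1)) = (s - 1 - y) - (s - 1) by lia.
        by rewrite back.
      + move=> y Hy; rewrite (HY y); try lia.
        have -> : s + l - 1 - y = (s - 1 - y) + l by lia. by rewrite Hl'.
    move=> x; rewrite (R1 (x + 2)) (R2 x); congr F; lia.
  -
    have R1 : forall y, F y = F (s + 1 - y).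
      apply: (per_ext _ _ (g) (s + 1 - n)) => //.
      + move=> y; have -> : s + 1 - (y + g) = (s + 1 - y) - g by lia.
        by rewrite back.
      + move=> y Hy; have := HX (- y); rewrite Z.opp_involutive => ->; try lia.
        have -> : s + 1 - y = (s - l + 1 + - y) + l by lia. by rewrite Hl'.
    have R2 : forall y, F y = F (s - 1 - y).
      apply: (per_ext _ _ (g) (l + s - n)) => //.
      + move=> y; have -> : s - 1 - (y + g) = (s - 1 - y) - g by lia.
        by rewrite back.
      + move=> y Hy; rewrite (HY y); try lia.
        have -> : s + l - 1 - y = (s - 1 - y) + l by lia. by rewrite Hl'.
    move=> x; rewrite (R1 (x + 2)) (R2 x); congr F; lia.
have one : forall x, F (x + 1) = F x.
  move=> x.
  have [q Hq] : exists q, g + 1 = q * 2.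
    have [m Hm] := proj1 (Z.odd_spec g) Hgodd.
    exists (m + 1); lia.
  rewrite -[RHS](per_mult F 2 two q x) -Hq.
  have -> : x + (g + 1) = (x + 1) + g by lia. by rewrite Hgp.
move=> x; have H := per_mult F 1 one x 0; rewrite Z.add_0_l Z.mul_1_r in H; exact H.
Qed.
End CoreZ.


Definition Radj (n s p q : nat) : Prop :=
  q = p.+1 \/ p = q.+1 \/ (p = n - 1 /\ q = 0) \/ (q = n - 1 /\ p = 0) \/
  (p = 0 /\ q = s) \/ (p = s /\ q = 0).

Definition ipath (n s l : nat) (g : nat -> nat) : Prop :=
  (forall j, j <= l -> g j < n) /\
  (forall j1 j2, j1 <= l -> j2 <= l -> g j1 = g j2 -> j1 = j2) /\
  (forall j, j < l -> Radj n s (g j) (g j.+1)).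

Definition gseg (n s a : nat) (df ds : bool) (j : nat) : nat :=
  if j < a then (if df then n - a + j else a - j)
  else if j == a then 0 else (if ds then s + (j - a - 1) else s - (j - a - 1)).

Ltac solve_radj := rewrite /Radj; repeat (case: ifP => ?);
  first [ by left; lia | by right; left; lia | by right; right; left; lia
        | by right;right;right;left;lia | by right;right;right;right;left;lia
        | by right;right;right;right;right;lia ].

Ltac solve_ipath :=
  rewrite /ipath /gseg /=; split; [|split];
  [ move=> j Hj; repeat case: ifP; lia
  | move=> j1 j2 Hj1 Hj2; repeat case: ifP; lia
  | move=> j Hj; solve_radj ].

Lemma arc_ipath n s l p : 1 <= l < n -> p < n ->
  ipath n s l (fun j => if p + j < n then p + j else p + j - n).
Proof. move=> Hl Hp. rewrite /ipath /=; split; [|split];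
  [ move=> j Hj; repeat case: ifP; lia
  | move=> j1 j2 Hj1 Hj2; repeat case: ifP; lia
  | move=> j Hj; solve_radj ].
Qed.

Lemma X_ipath n s l a : 2 <= s -> s + 2 <= n -> 1 <= l < n ->
  a <= l - 1 -> a <= n - s - 1 -> l - 1 - a <= s - 1 ->
  ipath n s l (gseg n s a true false).
Proof. move=> *. solve_ipath. Qed.

Lemma Y_ipath n s l a : 2 <= s -> s + 2 <= n -> 1 <= l < n ->
  a <= l - 1 -> a <= s - 1 -> s + (l - 1 - a) <= n - 1 ->
  ipath n s l (gseg n s a false true).
Proof. move=> *. solve_ipath. Qed.

Lemma Z_ipath n s l a : 2 <= s -> s + 2 <= n -> 1 <= l < n ->
  a <= l - 1 -> l <= n - s ->
  ipath n s l (gseg n s a true true).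
Proof. move=> *. solve_ipath. Qed.

Lemma W_ipath n s l a : 2 <= s -> s + 2 <= n -> 1 <= l < n ->
  a <= l - 1 -> l <= s ->
  ipath n s l (gseg n s a false false).
Proof. move=> *. solve_ipath. Qed.


Ltac fz_side FZ := first [ exists 0%Z; lia | exists (-1)%Z; lia | exists 1%Z; lia ].

Lemma core_index n s l (col : nat -> bool) : 2 <= s -> s + 2 <= n -> 1 <= l < n -> odd l ->
  (exists p, p < n /\ col p != col 0) ->
  exists g, ipath n s l g /\ col (g 0) != col (g l).
Proof.
move=> Hs Hsn Hl Hodd [p [Hp Hcol]].
apply: NNPP => Hno.
have Hno' : forall g, ipath n s l g -> col (g 0) = col (g l).
  move=> g Hg; apply/eqP; apply: contraT => H; exfalso; apply: Hno; exists g; by split.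
pose F (x : Z) := col (Z.to_nat (x mod Z.of_nat n)).
have FZ : forall x (r : nat), r < n -> (exists q, x = (Z.of_nat n * q + Z.of_nat r)%Z) -> F x = col r.
  move=> x r Hr [q Hq]; rewrite /F -(Z.mod_unique_pos x (Z.of_nat n) q (Z.of_nat r)) //; last lia.
  by rewrite Nat2Z.id.
have Hodd' : Z.odd (Z.of_nat l) = true.
  have := odd_double_half l; rewrite Hodd => El.
  have -> : Z.of_nat l = (2 * Z.of_nat l./2 + 1)%Z by rewrite -El -muln2; lia.
  exact: Z.odd_odd.
have Hc := @core_arith F (Z.of_nat n) (Z.of_nat s) (Z.of_nat l).
have key : forall x, F x = F 0%Z.
  apply: Hc => //; try lia.
  - move=> x; rewrite /F; congr col; congr Z.to_nat.
    have -> : (x + Z.of_nat n = x + 1 * Z.of_nat n)%Z by lia.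
    rewrite Z.mod_add //; lia.
  - move=> p0 Hp0.
    set p' := Z.to_nat p0.
    have Hg := @arc_ipath n s l p' Hl ltac:(lia).
    have E := Hno' _ Hg.
    rewrite (FZ p0 (if p' + 0 < n then p' + 0 else p' + 0 - n)).
      rewrite (FZ (p0 + Z.of_nat l)%Z (if p' + l < n then p' + l else p' + l - n)) //.
        by case: ifP; lia.
      case: ifP => ?; [exists 0%Z | exists 1%Z]; lia.
    by case: ifP; lia.
    case: ifP => ?; [exists 0%Z | exists 1%Z]; lia.
  - move=> a Ha *.
    have Hg := @X_ipath n s l (Z.to_nat a) Hs Hsn Hl ltac:(lia) ltac:(lia) ltac:(lia).
    have E := Hno' _ Hg.
    set g := gseg n s (Z.to_nat a) true false in Hg E.
    have Hgb : forall j, j <= l -> g j < n by case: Hg.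
    match goal with |- F ?X = F ?Y =>
      rewrite (FZ X (g 0)); [ rewrite (FZ Y (g l)); [ exact E | apply: Hgb; lia | ] | apply: Hgb; lia | ] end;
    rewrite /g /gseg /=; repeat (case: ifP => ?); fz_side FZ.
  - move=> a Ha *.
    have Hg := @Y_ipath n s l (Z.to_nat a) Hs Hsn Hl ltac:(lia) ltac:(lia) ltac:(lia).
    have E := Hno' _ Hg.
    set g := gseg n s (Z.to_nat a) false true in Hg E.
    have Hgb : forall j, j <= l -> g j < n by case: Hg.
    match goal with |- F ?X = F ?Y =>
      rewrite (FZ X (g 0)); [ rewrite (FZ Y (g l)); [ exact E | apply: Hgb; lia | ] | apply: Hgb; lia | ] end;
    rewrite /g /gseg /=; repeat (case: ifP => ?); fz_side FZ.
  - move=> Hcond a Ha *.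
    have Hg := @Z_ipath n s l (Z.to_nat a) Hs Hsn Hl ltac:(lia) ltac:(lia).
    have E := Hno' _ Hg.
    set g := gseg n s (Z.to_nat a) true true in Hg E.
    have Hgb : forall j, j <= l -> g j < n by case: Hg.
    match goal with |- F ?X = F ?Y =>
      rewrite (FZ X (g 0)); [ rewrite (FZ Y (g l)); [ exact E | apply: Hgb; lia | ] | apply: Hgb; lia | ] end;
    rewrite /g /gseg /=; repeat (case: ifP => ?); fz_side FZ.
  - move=> Hcond a Ha *.
    have Hg := @W_ipath n s l (Z.to_nat a) Hs Hsn Hl ltac:(lia) ltac:(lia).
    have E := Hno' _ Hg.
    set g := gseg n s (Z.to_nat a) false false in Hg E.
    have Hgb : forall j, j <= l -> g j < n by case: Hg.
    match goal with |- F ?X = F ?Y =>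
      rewrite (FZ X (g 0)); [ rewrite (FZ Y (g l)); [ exact E | apply: Hgb; lia | ] | apply: Hgb; lia | ] end;
    rewrite /g /gseg /=; repeat (case: ifP => ?); fz_side FZ.
have := key (Z.of_nat p).
rewrite (FZ (Z.of_nat p) p) //; last by exists 0%Z; lia.
rewrite (FZ 0%Z 0); [| lia | by exists 0%Z; lia].
by move=> E; move: Hcol; rewrite E eqxx.
Qed.

Set Implicit Arguments. Unset Strict Implicit. Unset Printing Implicit Defensive.


Section Levels.
Variable V : finType.
Variable ET : {set {set V}}.
Variable VT : {set V}.
Variable x : V.
Hypothesis HETV : forall e, e \in ET -> e \subset VT.
Hypothesis HxV : x \in VT.

Definition Lv (v : V) (t : nat) : Prop := v \in VT /\ dist_eq ET x v t.

Lemma walk_ext u v t : walk ET x u t -> [set u; v] \in ET -> walk ET x v t.+1.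
Proof.
case=> s [Hs [Hp Hl]] He; exists (rcons s v); split; first by rewrite size_rcons Hs.
by rewrite rcons_path Hp Hl /= last_rcons /adj He.
Qed.

Lemma walk_last v t : walk ET x v t.+1 -> exists u, walk ET x u t /\ [set u; v] \in ET.
Proof.
case=> s [Hs [Hp Hl]].
case/lastP: s Hs Hp Hl => [//|s z]; rewrite size_rcons rcons_path last_rcons => [[Hs]] /andP [Hp He] Hz.
subst z; exists (last x s); split => //; by exists s.
Qed.

Lemma Lv_uniq v t1 t2 : Lv v t1 -> Lv v t2 -> t1 = t2.
Proof.
move=> [_ [W1 N1]] [_ [W2 N2]].
case: (ltngtP t1 t2) => // H; [by case: (N2 _ H) | by case: (N1 _ H)].
Qed.

Lemma Lv0 v : Lv v 0 -> v = x.
Proof. by move=> [_ [[s [Hs [_ Hl]]] _]]; case: s Hs Hl. Qed.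

Lemma Lvx : Lv x 0.
Proof. split => //; split; first by exists [::]. by []. Qed.

Lemma Lv_par v t : Lv v t.+1 -> exists u, Lv u t /\ [set u; v] \in ET.
Proof.
move=> [Hv [W N]]; case: (walk_last W) => u [Wu He].
exists u; split => //; split.
  by apply: (subsetP (HETV He)); rewrite !inE eqxx.
split => // j Hj Wj; apply: (N j.+1) => //; exact: walk_ext Wj He.
Qed.

Definition par (v : V) : V :=
  epsilon (inhabits x) (fun u => exists t, Lv v t.+1 /\ Lv u t /\ [set u; v] \in ET).

Lemma par_spec v t : Lv v t.+1 -> Lv (par v) t /\ [set par v; v] \in ET.
Proof.
move=> Hv.
have : exists u, exists t, Lv v t.+1 /\ Lv u t /\ [set u; v] \in ET.
  case: (Lv_par Hv) => u [Hu He]; by exists u, t.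
move/(epsilon_spec (inhabits x)); rewrite -/(par v) => [[t' [Hv' [Hu He]]]].
have Et : t' = t by apply/eq_add_S; exact: Lv_uniq Hv' Hv.
by subst t'.
Qed.

Variable i : nat.
Definition anc (v : V) (t : nat) : V := iter (i - t) par v.

Lemma anc_i v : anc v i = v.
Proof. by rewrite /anc subnn. Qed.

Lemma anc_step v t : t < i -> anc v t = par (anc v t.+1).
Proof. by move=> Ht; rewrite /anc -iterS; congr iter; lia. Qed.

Lemma anc_spec v t : Lv v i -> t <= i -> Lv (anc v t) t.
Proof.
move=> Hv; move Hd: (i - t) => d; elim: d t Hd => [|d IH] t Hd Ht.
  have -> : t = i by lia. by rewrite anc_i.
rewrite anc_step; last lia.
apply: (proj1 (par_spec _)); apply: IH; lia.
Qed.

Lemma anc_edge v t : Lv v i -> t < i -> [set anc v t; anc v t.+1] \in ET.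
Proof.
move=> Hv Ht; rewrite anc_step //; apply: (proj2 (par_spec _)); exact: anc_spec.
Qed.

Lemma anc0 v : Lv v i -> anc v 0 = x.
Proof. move=> Hv; apply: Lv0; exact: anc_spec. Qed.

Lemma anc_up v t d : t + d <= i -> anc v t = iter d par (anc v (t + d)).
Proof.
move=> H; rewrite /anc -iterD; congr iter; lia.
Qed.

End Levels.

Section Graph.
Variable V : finType.
Variable H : {set {set V}}.
Variable pi : {set V} -> {set V}.
Hypothesis Hch : choice_fun H pi.

Lemma set2C (a b : V) : [set a; b] = [set b; a].
Proof. by rewrite setUC. Qed.

Lemma modS1 a m : a < m -> (a + 1) %% m = if a + 1 < m then a + 1 else 0.
Proof.
move=> Ham; case: ifP => H1; first by rewrite modn_small.
have -> : a + 1 = m by lia. by rewrite modnn.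
Qed.

Lemma berge_of_fun m (phi : nat -> V) : 3 <= m ->
  (forall a b, a < m -> b < m -> phi a = phi b -> a = b) ->
  (forall a, a < m -> [set phi a; phi ((a + 1) %% m)] \in Gpi H pi) ->
  berge_cycle H m.
Proof.
move=> Hm Hinj Hadj.
pose hs a := epsilon (inhabits set0)
   (fun E => E \in H /\ pi E = [set phi a; phi ((a + 1) %% m)]).
have Hhs : forall a, a < m -> hs a \in H /\ pi (hs a) = [set phi a; phi ((a + 1) %% m)].
  move=> a Ha; rewrite /hs.
  apply: (@epsilon_spec _ (inhabits set0) (fun E => E \in H /\ pi E = [set phi a; phi ((a + 1) %% m)])).
  case/imsetP: (Hadj a Ha) => E; rewrite inE => /andP [HE _] ->.
  by exists E.
exists hs, phi; split; [|split; [|split]].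
- by move=> a Ha; case: (Hhs a Ha).
- move=> a b Ha Hb Hab; apply/negP => /eqP Heq.
  have E1 : [set phi a; phi ((a + 1) %% m)] = [set phi b; phi ((b + 1) %% m)].
    by rewrite -(proj2 (Hhs a Ha)) -(proj2 (Hhs b Hb)) Heq.
  have Ha' : (a + 1) %% m < m by rewrite ltn_mod; lia.
  have Hb' : (b + 1) %% m < m by rewrite ltn_mod; lia.
  have M1 : phi a \in [set phi b; phi ((b + 1) %% m)] by rewrite -E1 !inE eqxx.
  have M2 : phi ((a + 1) %% m) \in [set phi b; phi ((b + 1) %% m)] by rewrite -E1 !inE eqxx orbT.
  move: M1 M2; rewrite !inE => /orP [] /eqP E2 /orP [] /eqP E3.
  + have := Hinj _ _ Ha Hb E2; move: Hab; lia.
  + have := Hinj _ _ Ha Hb E2; move: Hab; lia.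
  + have := Hinj _ _ Ha Hb' E2; have := Hinj _ _ Ha' Hb E3; move: Hab.
    rewrite (modS1 Ha) (modS1 Hb); case: ifP; case: ifP; lia.
  + have := Hinj _ _ Ha Hb' E2; have := Hinj _ _ Ha' Hb' E3; move: Hab.
    rewrite (modS1 Ha) (modS1 Hb); case: ifP; case: ifP; lia.
- move=> a b Ha Hb Hab; apply/negP => /eqP E; move: Hab; rewrite (Hinj a b) //; lia.
- move=> a Ha; rewrite -(proj2 (Hhs a Ha)); by case: (Hch (proj1 (Hhs a Ha))).
Qed.

Definition nb (S : {set V}) (v : V) : {set V} := [set u in S | [set v; u] \in Gpi H pi].

Lemma Gpi_card2 e : e \in Gpi H pi -> #|e| = 2.
Proof.
case/imsetP => E; rewrite inE => /andP [HE Hne] ->.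
by case: (Hch HE) => _ [//|Hz]; move: Hne; rewrite Hz eqxx.
Qed.

Lemma e_induced_del (S : {set V}) (v : V) : v \in S ->
  e_induced (Gpi H pi) S <= e_induced (Gpi H pi) (S :\ v) + #|nb S v|.
Proof.
move=> Hv; rewrite /e_induced.
set A := [set e in Gpi H pi | e \subset S].
set B := [set e in Gpi H pi | e \subset S :\ v].
set C := [set [set v; u] | u in nb S v].
have sub : A \subset B :|: C.
  apply/subsetP => e; rewrite !inE => /andP [He HeS].
  case Hve: (v \in e).
  - apply/orP; right.
    have := Gpi_card2 He => /eqP /cards2P [a [b [Hab Eab]]].
    move: Hve HeS He; rewrite Eab !inE => /orP [] /eqP Ev HeS He.
    + apply/imsetP; exists b; last by rewrite Ev.
      rewrite !inE Ev He andbT.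
      by apply: (subsetP HeS); rewrite !inE eqxx orbT.
    + apply/imsetP; exists a; last by rewrite Ev set2C.
      rewrite !inE Ev set2C He andbT.
      by apply: (subsetP HeS); rewrite !inE eqxx.
  - apply/orP; left; rewrite He /=.
    apply/subsetP => y Hy; rewrite !inE (subsetP HeS _ Hy) andbT.
    by apply/eqP => Eyv; move: Hve; rewrite -Eyv Hy.
apply: (leq_trans (subset_leq_card sub)).
apply: (leq_trans (leq_card_setU _ _)).
by rewrite leq_add2l leq_imset_card.
Qed.

Lemma dense d (S : {set V}) : d * #|S| < e_induced (Gpi H pi) S ->
  exists S' : {set V}, S' \subset S /\ S' != set0 /\ forall v, v \in S' -> d < #|nb S' v|.
Proof.
move Hn: #|S| => n; elim: n S Hn => [|n IH] S Hn Hd.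
  exfalso; move: Hd; rewrite /e_induced.
  have -> : S = set0 by apply/eqP; rewrite -cards_eq0 Hn.
  rewrite muln0 ltnNge => /negP; apply.
  rewrite leqn0 cards_eq0; apply/eqP/setP => e; rewrite !inE.
  apply/negP => /andP [He Hs].
  move: (Gpi_card2 He); have -> : e = set0 by apply/eqP; rewrite -subset0.
  by rewrite cards0.
case Hall: [forall v in S, d < #|nb S v|].
  exists S; split => //; split.
    by apply/negP => /eqP HS; move: Hn; rewrite HS cards0.
  by move=> v Hv; move/forall_inP: Hall; apply.
move/negbT: Hall; rewrite negb_forall_in => /existsP [v /andP [Hv Hdv]].
have Hn' : #|S :\ v| = n by move: (Hn); rewrite (cardsD1 v S) Hv; lia.
have Hd' : d * n < e_induced (Gpi H pi) (S :\ v).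
  have Hdel := e_induced_del Hv; rewrite -leqNgt in Hdv.
  nia.
case: (IH _ Hn' Hd') => S' [Hsub [Hne Hdeg]].
exists S'; split => //; apply: subset_trans Hsub _; exact: subD1set.
Qed.

Notation Ed := (Gpi H pi).

Lemma uniq_size_le (q : seq V) : uniq q -> size q <= #|V|.
Proof. by move/card_uniqP <-; exact: max_card. Qed.

Lemma max_path (S : {set V}) : S != set0 ->
  exists h r, uniq (h :: r) /\ all (fun z => z \in S) (h :: r) /\ path (adj Ed) h r /\
    {subset nb S h <= h :: r}.
Proof.
case/set0Pn => v0 Hv0.
suff : forall m h r, #|V| - size (h :: r) <= m -> uniq (h :: r) ->
  all (fun z => z \in S) (h :: r) -> path (adj Ed) h r ->
  exists h' r', uniq (h' :: r') /\ all (fun z => z \in S) (h' :: r') /\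
    path (adj Ed) h' r' /\ {subset nb S h' <= h' :: r'}.
  by move/(_ #|V| v0 [::]); apply => //=; [lia | rewrite Hv0].
elim=> [|m IH] h r Hm Hu Ha Hp; rewrite /= in Hm.
  exists h, r; split => //; split => //; split => // u Hu'.
  apply/negPn/negP => Hn.
  have : uniq (u :: h :: r) by rewrite /= Hn.
  move/uniq_size_le => /=. lia.
case: (boolP (nb S h \subset [set z in h :: r])) => Hsub.
  exists h, r; split => //; split => //; split => // u Hu'.
  by move: (subsetP Hsub u Hu'); rewrite inE.
case/subsetPn: Hsub => u Hu'; rewrite inE => Hn.
move: (Hu'); rewrite inE => /andP [HuS Hhu].
apply: (IH u (h :: r)).
- have : uniq (u :: h :: r) by rewrite /= Hn.
  move/uniq_size_le => /=; lia.
- by rewrite cons_uniq Hn Hu.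
- by rewrite /= HuS.
- by rewrite /= /adj set2C Hhu.
Qed.

Lemma fan (S : {set V}) (D : nat) : 3 <= D -> S != set0 ->
  (forall v, v \in S -> D <= #|nb S v|) ->
  exists (cyc : nat -> V) (n s : nat), D + 1 <= n /\ 2 <= s /\ s + 2 <= n /\
    (forall j, j < n -> cyc j \in S) /\
    (forall a b, a < n -> b < n -> cyc a = cyc b -> a = b) /\
    (forall p q, p < n -> q < n -> Radj n s p q -> [set cyc p; cyc q] \in Ed).
Proof.
move=> HD HS Hdeg.
case: (max_path HS) => h [r [Hu [Ha [Hp Hsub]]]].
set q := h :: r.
set N := nb S h.
have HhS : h \in S by move: Ha => /= /andP [].
have HN : D <= #|N| by apply: Hdeg.
have HhN : h \notin N.
  apply/negP; rewrite inE => /andP [_ He].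
  by move: (Gpi_card2 He); rewrite setUid cards1.
have Hidx1 : forall u, u \in N -> 0 < index u q < size q.
  move=> u Hu'; have Huq := Hsub u Hu'.
  rewrite index_mem Huq andbT lt0n; apply/negP => /eqP H0.
  have : nth h q (index u q) = u by apply: nth_index.
  by rewrite H0 /= => Eu; move: HhN; rewrite Eu Hu'.
have : 0 < #|N| by lia.
rewrite card_gt0 => /set0Pn [u0 Hu0].
pose um := [arg max_(u > u0 in N) index u q].
have [Hum Hmax] : um \in N /\ forall u, u \in N -> index u q <= index um q.
  rewrite /um; case: arg_maxnP => // w Hw Hm; split => // u Hu'; exact: Hm.
set M := index um q.
have HM1 := Hidx1 um Hum.
have Hnth : forall u, u \in N -> nth h q (index u q) = u.
  by move=> u Hu'; rewrite nth_index // Hsub.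
have HDM : D <= M.
  have sub : N \subset [seq nth h q j | j <- iota 1 M].
    apply/subsetP => u Hu'; apply/mapP; exists (index u q); last by rewrite Hnth.
    rewrite mem_iota; have := Hidx1 u Hu'; have := Hmax u Hu'; rewrite -/M; lia.
  apply: leq_trans HN _; apply: leq_trans (subset_leq_card sub) _.
  apply: leq_trans (card_size _) _; by rewrite size_map size_iota.
have : 0 < #|N :\ um :\ nth h q 1|.
  have := cardsD1 um N; have := cardsD1 (nth h q 1) (N :\ um).
  case: (_ \in _); case: (_ \in _); lia.
rewrite card_gt0 => /set0Pn [us]; rewrite !in_setD1 => /and3P [Hus1 Husm HusN].
set s := index us q.
have Hs1 := Hidx1 us HusN.
have Hs2 : s != 1.
  apply/negP => /eqP E1; move: Hus1; by rewrite -(Hnth us HusN) -/s E1 eqxx.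
have Hs3 : s != M.
  apply/negP => /eqP E1; move: Husm; by rewrite -(Hnth us HusN) -(Hnth um Hum) -/s -/M E1 eqxx.
have HsM : s <= M by apply: Hmax.
have Hq : size q = (size r).+1 by [].
have Hs0 : 0 < s by case/andP: Hs1.
have HhM : [set h; nth h q M] \in Ed by rewrite /M Hnth //; move: Hum; rewrite inE => /andP [].
have Hhs : [set h; nth h q s] \in Ed by rewrite /s Hnth //; move: HusN; rewrite inE => /andP [].
have HMq : M < size q by case/andP: HM1.
clearbody s M um.
have A1 : [/\ D + 1 <= M.+1, 1 < s & s + 2 <= M.+1].
  by clear -HDM Hs0 Hs2 Hs3 HsM; split; lia.
case: A1 => A1 A2 A3.
exists (nth h q), M.+1, s; split => //; split => //; split => //; split; [| split].
- move=> j Hj; apply: (allP Ha); apply: mem_nth; exact: leq_trans Hj HMq.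
- move=> a b Ha' Hb' /eqP; rewrite nth_uniq //; [by move/eqP | exact: leq_trans Ha' HMq | exact: leq_trans Hb' HMq].
- have Hpath := (pathP h Hp).
  have step : forall p, p.+1 < M.+1 -> [set nth h q p; nth h q p.+1] \in Ed.
    move=> p Hp1; have Hp2 : p < size r by rewrite -ltnS -Hq; exact: leq_trans Hp1 HMq.
    have := Hpath p Hp2; by rewrite /adj.
  have E0 : nth h q 0 = h by [].
  have EM : M.+1 - 1 = M by rewrite subn1.
  move=> p p' Hp1 Hp2 [E|[E|[[E1 E2]|[[E1 E2]|[[E1 E2]|[E1 E2]]]]]].
  + by rewrite E; apply: step; rewrite -E.
  + by rewrite E set2C; apply: step; rewrite -E.
  + by rewrite E1 E2 E0 set2C EM.
  + by rewrite E1 E2 E0 EM.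
  + by rewrite E1 E2 E0.
  + by rewrite E1 E2 E0 set2C.
Qed.
End Graph.



Lemma final_cycle (V : finType) (Ed : {set {set V}}) (Lv : V -> nat -> Prop)
  (A : V -> nat -> V) (p : nat -> V) (l i t : nat) :
  (forall v t1 t2, Lv v t1 -> Lv v t2 -> t1 = t2) ->
  (forall v L, Lv v i -> L <= i -> Lv (A v L) L) ->
  (forall v, A v i = v) ->
  (forall v L, Lv v i -> L < i -> [set A v L; A v L.+1] \in Ed) ->
  (forall j, j <= l -> Lv (p j) i) ->
  (forall j1 j2, j1 <= l -> j2 <= l -> p j1 = p j2 -> j1 = j2) ->
  (forall j, j < l -> [set p j; p j.+1] \in Ed) ->
  A (p 0) t = A (p l) t ->
  (forall L, t < L -> L <= i -> A (p 0) L <> A (p l) L) ->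
  t < i ->
  exists phi : nat -> V,
    (forall a b, a < 2 * (i - t) + l -> b < 2 * (i - t) + l -> phi a = phi b -> a = b) /\
    (forall a, a < 2 * (i - t) + l ->
       [set phi a; phi ((a + 1) %% (2 * (i - t) + l))] \in Ed).
Proof.
move=> HLvU HA HAi HTE Hp Hpinj Hpadj Hut Hsep Hti.
set u := p 0; set w := p l.
have Hu : Lv u i by apply: Hp.
have Hw : Lv w i by apply: Hp.
set m := 2 * (i - t) + l.
pose phi r := if r < i - t then A u (t + r) else if r <= i - t + l then p (r - (i - t))
              else A w (i - (r - (i - t + l))).
pose lev r := if r < i - t then t + r else if r <= i - t + l then i else i - (r - (i - t + l)).
have HL : forall r, r < m -> Lv (phi r) (lev r).
  move=> r Hr; rewrite /phi /lev; case: ifP => H1; [|case: ifP => H2].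
  - apply: HA => //; lia.
  - apply: Hp; lia.
  - apply: HA => //; lia.
exists phi; split.
- move=> a b Ha Hb E.
  have Elev : lev a = lev b by apply: (HLvU (phi a)); [apply: HL | rewrite E; apply: HL].
  move: E Elev; rewrite /phi /lev.
  case: ifP => Ha1; [|case: ifP => Ha2]; case: ifP => Hb1; try case: ifP => Hb2; move=> E Elev; try lia.
  + exfalso; apply: (Hsep (t + a)); [lia|lia|]; rewrite E; congr A; lia.
  + have := Hpinj _ _ _ _ E; lia.
  + exfalso; apply: (Hsep (t + b)); [lia|lia|]; rewrite -E; congr A; lia.
- move=> a Ha; rewrite (modS1 Ha).
  case: ifP => Ham.
  + rewrite /phi.
    case: ifP => H1; [|case: ifP => H2]; case: ifP => H3; try case: ifP => H4; try (exfalso; lia).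
    * have -> : t + (a + 1) = (t + a).+1 by lia. apply: HTE => //; lia.
    * have E1 : i = (t + a).+1 by lia.
      have E2 : a + 1 - (i - t) = 0 by lia.
      have := HTE u (t + a) Hu ltac:(lia); by rewrite -E1 HAi E2.
    * have -> : a + 1 - (i - t) = (a - (i - t)).+1 by lia. apply: Hpadj; lia.
    * have E1 : a - (i - t) = l by lia.
      have E2 : i - (a + 1 - (i - t + l)) = i.-1 by lia.
      rewrite E1 E2 set2C -/w; have := HTE w i.-1 Hw ltac:(lia).
      by rewrite (_ : i.-1.+1 = i) ?HAi //; lia.
    * have E2 : i - (a - (i - t + l)) = (i - (a + 1 - (i - t + l))).+1 by lia.
      rewrite E2 set2C; apply: HTE => //; lia.
  + rewrite /phi.
    have -> : (0 < i - t) = true by lia.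
    rewrite addn0 Hut.
    case: ifP => H1; [exfalso; lia|]; case: ifP => H2.
    * have E1 : a - (i - t) = l by lia.
      rewrite E1 set2C -/w; have := HTE w t Hw Hti.
      by rewrite (_ : t.+1 = i) ?HAi //; lia.
    * have E1 : i - (a - (i - t + l)) = t.+1 by lia.
      rewrite E1 set2C; apply: HTE => //.
Qed.

Lemma trans_point (P : nat -> bool) i : P 0 -> ~~ P i -> exists t, t < i /\ P t /\ ~~ P t.+1.
Proof.
move=> H0; elim: i => [|i IH] Hi; first by rewrite H0 in Hi.
case: (boolP (P i)) => Hpi; first by exists i.
case: (IH Hpi) => t [Ht [H1 H2]]; exists t; split => //; lia.
Qed.

Theorem corollary5p3 (V : finType) (k : nat) (H : {set {set V}})
  (pi : {set V} -> {set V}) (VT : {set V}) (ET : {set {set V}}) (x : V) :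
  2 <= k ->
  uniform3 H ->
  linear_hg H ->
  ~ berge_cycle H (2 * k + 1) ->
  choice_fun H pi ->
  subtree (Gpi H pi) VT ET ->
  x \in VT ->
  forall (i : nat) (Vi : {set V}),
    1 <= i <= k ->
    (forall v, v \in Vi <-> (v \in VT /\ dist_eq ET x v i)) ->
    e_induced (Gpi H pi) Vi <= (2 * k - 2) * #|Vi|.
Proof.
move=> Hk _ _ Hnob Hch [HETsub [HETe _]] HxV i Vi Hi HVi.
have HETV : forall e, e \in ET -> e \subset VT by move=> e He; case: (HETe e He).
rewrite leqNgt; apply/negP => Hd.
case: (dense Hch Hd) => S' [HS'sub [HS'ne HS'deg]].
have Hdeg : forall v, v \in S' -> 2 * k - 1 <= #|nb H pi S' v|.
  by move=> v Hv; have := HS'deg v Hv; clear; lia.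
have HD : 3 <= 2 * k - 1 by clear -Hk; lia.
case: (fan Hch HD HS'ne Hdeg) => cyc [n [s [Hn [Hs2 [Hsn [HcS [Hcinj Hcadj]]]]]]].
have HLi : forall j, j < n -> Lv ET VT x (cyc j) i.
  move=> j Hj; exact: (proj1 (HVi _) (subsetP HS'sub _ (HcS j Hj))).
pose A := anc ET VT x i.
pose P t := [forall j : 'I_n, A (cyc j) t == A (cyc 0) t].
have Hn1 : 1 < n by clear -Hn Hk; lia.
have HP0 : P 0.
  apply/forallP => j; rewrite /A !(anc0 HETV HxV) //; apply: HLi => //; exact: ltnW Hn1.
have HPi : ~~ P i.
  apply/negP => /forallP /(_ (Ordinal Hn1)) /=; rewrite /A !anc_i => /eqP /Hcinj.
  by move/(_ Hn1 (ltnW Hn1)).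
case: (trans_point HP0 HPi) => t [Hti [HPt HPt1]].
pose col j := A (cyc j) t.+1 == A (cyc 0) t.+1.
have Hcol : exists p, p < n /\ col p != col 0.
  move: HPt1; rewrite negb_forall => /existsP [j Hj]; exists j; split => //.
  by rewrite /col eqxx (negbTE Hj).
have Hl : 1 <= 2 * (k - i + t) + 1 < n by clear -Hn Hk Hi Hti; lia.
have Hodd : odd (2 * (k - i + t) + 1) by rewrite addn1 /= mul2n odd_double.
case: (@core_index n s _ col Hs2 Hsn Hl Hodd Hcol) => g [[Hgb [Hginj Hgadj]] Hgcol].
set l := 2 * (k - i + t) + 1 in Hl Hgb Hginj Hgadj Hgcol.
have Hg0 : g 0 < n by apply: Hgb.
have Hgl : g l < n by apply: Hgb.
have Hut : A (cyc (g 0)) t = A (cyc (g l)) t.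
  move/forallP: (HPt) => HP.
  by rewrite (eqP (HP (Ordinal Hg0))) (eqP (HP (Ordinal Hgl))).
have Hsep : forall L, t < L -> L <= i -> A (cyc (g 0)) L <> A (cyc (g l)) L.
  move=> L HL1 HL2 E.
  have E1 : A (cyc (g 0)) t.+1 = A (cyc (g l)) t.+1.
    have EL : t.+1 + (L - t.+1) = L by clear -HL1; lia.
    have HLe : t.+1 + (L - t.+1) <= i by rewrite EL.
    by rewrite /A (anc_up ET HxV (cyc (g 0)) HLe) (anc_up ET HxV (cyc (g l)) HLe) EL -/A E.
  move: Hgcol; rewrite /col E1.
  by case: (A (cyc (g l)) t.+1 == A (cyc 0) t.+1).
have := @final_cycle V (Gpi H pi) (Lv ET VT x) A (fun j => cyc (g j)) l i t.
case.
- move=> v t1 t2; exact: Lv_uniq.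
- move=> v L Hv HL; exact: anc_spec.
- move=> v; exact: anc_i.
- move=> v L Hv HL; apply: (subsetP HETsub); exact: anc_edge.
- move=> j Hj; apply: HLi; exact: Hgb.
- move=> j1 j2 Hj1 Hj2 E; apply: Hginj => //; apply: Hcinj => //; exact: Hgb.
- move=> j Hj; apply: Hcadj; [apply: Hgb; exact: ltnW | apply: Hgb; exact: Hj | exact: Hgadj].
- exact: Hut.
- exact: Hsep.
- exact: Hti.
- move=> phi [Hinj Hadj]; apply: Hnob.
  have -> : 2 * k + 1 = 2 * (i - t) + l by rewrite /l; clear -Hi Hti; lia.
  apply: (berge_of_fun Hch _ Hinj Hadj); rewrite /l; clear -Hti; lia.
Qed.
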